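(* For two finite subsets $E,F\subseteq\mathbb{N}$ with $\min\{|E|,|F|\}\ge2$, we have $\mathcal{F}_E\subseteq\mathcal{F}_F$ if and only if $A_F\subseteq A_E$, $\Pi_F\setminus\{2\}\subseteq\Pi_E$, and $\alpha_E(p)=\alpha_F(p)$ for all $p\in A_F\setminus\Pi_E$.
   Context: $\mathbb{N}=\{1,2,\dots\}$, $\mathbb{N}_0=\{0\}\cup\mathbb{N}$, $\Pi$ the set of primes, $\Pi_z$ the set of prime divisors of $z$; $\{0,k\}+p\mathbb{Z}=p\mathbb{Z}\cup(k+p\mathbb{Z})$. The Kirch topology $\tau_K$ on $\mathbb{N}$ is generated by the base of all $a+b\mathbb{N}_0=\{a+bn:n\in\mathbb{N}_0\}$ with $a,b\in\mathbb{N}$ coprime and $b$ square-free. Closures $\overline{U}$ are in $\tau_K$; $\tau_x=\{U\in\tau_K:x\in U\}$. For finite $E\subseteq\mathbb{N}$, $\mathcal{F}_E=\{B\subseteq\mathbb{N}:\exists (U_x)_{x\in E}\in\prod_{x\in E}\tau_x\ (\bigcap_{x\in E}\overline{U_x}\subseteq B)\}$. For nonempty finite $E$: $\Pi_E=\bigcap_{z\in E}\Pi_z$; $A_E=\{p\in\Pi:\exists k\in\mathbb{N}\ (E\subseteq\{0,k\}+p\mathbb{Z})\}$; $\alpha_E:A_E\to\mathbb{N}_0$ is the unique function with $0\le\alpha_E(p)<p$ and $E\subseteq\{0,\alpha_E(p)\}+p\mathbb{Z}$ for all $p\in A_E$, $\alpha_E(2)=1$, and $\alpha_E(p)=0$ for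 $p\in\Pi_E\setminus\{2\}$. *)

(* Defs.v *)
(* Subsets of N = {1,2,...} are predicates on nat
   (nat -> Prop); finite subsets E of N are duplicate-free sequences of
   positive naturals. *)
From mathcomp Require Import all_boot.
Set Implicit Arguments. Unset Strict Implicit. Unset Printing Implicit Defensive.

Definition basic (a b : nat) : Prop :=
  [/\ 0 < a, 0 < b, coprime a b & forall p, prime p -> ~~ (p * p %| b)].

Definition progr (a b : nat) (y : nat) : Prop := exists n, y = a + b * n.

(* open sets of the Kirch topology: unions of basic sets *)
Definition kopen (U : nat -> Prop) : Prop :=
  forall x, U x -> exists a b, basic a b /\ progr a b x /\
                     (forall y, progr a b y -> U y).

Definition kclosure (U : nat -> Prop) (x : nat) : Prop :=
  0 < x /\ forall V, kopen V -> V x -> exists y, V y /\ U y.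

Definition inF (E : seq nat) (B : nat -> Prop) : Prop :=
  exists U : nat -> (nat -> Prop),
    (forall x, x \in E -> kopen (U x) /\ U x x) /\
    (forall y, (forall x, x \in E -> kclosure (U x) y) -> B y).

Definition inPi (E : seq nat) (p : nat) : Prop :=
  prime p /\ forall z, z \in E -> p %| z.

Definition inA (E : seq nat) (p : nat) : Prop :=
  prime p /\ exists k, 0 < k /\
    forall z, z \in E -> z = 0 %[mod p] \/ z = k %[mod p].

Definition is_alpha (E : seq nat) (alpha : nat -> nat) : Prop :=
  forall p, inA E p ->
    [/\ alpha p < p,
        (forall z, z \in E -> z = 0 %[mod p] \/ z = alpha p %[mod p]),
        (p = 2 -> alpha p = 1) &
        (inPi E p -> p <> 2 -> alpha p = 0)].

(* Main.v *)
Require Import Defs.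
From mathcomp Require Import all_boot.
From mathcomp Require Import zify.
Set Implicit Arguments. Unset Strict Implicit. Unset Printing Implicit Defensive.


Definition sqf (b : nat) := forall p, prime p -> ~~ (p * p %| b).

Lemma sqf1 : sqf 1.
Proof. move=> q pq; apply/negP=> /dvdn_leq; have := prime_gt1 pq; nia. Qed.

Lemma sqf_prime p : prime p -> sqf p.
Proof.
move=> pp q pq; apply/negP=> H.
have hq : q %| p by apply: dvdn_trans H; apply: dvdn_mulr.
move: hq; rewrite dvdn_prime2 // => /eqP E; subst q.
move/dvdn_leq: H; have := prime_gt1 pp; nia.
Qed.

Lemma coprime_progr a b n : coprime a b -> coprime (a + b * n) b.
Proof. by rewrite /coprime [gcdn (a + _) b]gcdnC [a + _]addnC mulnC gcdnMDl gcdnC. Qed.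

Lemma kopen_progr a b : basic a b -> kopen (progr a b).
Proof.
case=> a0 b0 cab sb w [n ->]; exists (a + b * n), b; split; last split.
- split => //; first by rewrite addn_gt0 a0.
  exact: coprime_progr.
- by exists 0; rewrite muln0 addn0.
- move=> v [k ->]; exists (n + k); by rewrite mulnDr addnA.
Qed.

Lemma progr_mod a b w : progr a b w -> w = a %[mod b].
Proof. by case=> n ->; rewrite mulnC addnC modnMDl. Qed.

Lemma clos_nec z c y q : kclosure (progr z c) y -> prime q -> q %| c ->
  ~~ (q %| y) -> y = z %[mod q].
Proof.
case=> y0 H pq qc qy.
have bq : basic y q.
  split => //; first exact: prime_gt0.
  by rewrite coprime_sym prime_coprime.
  exact: sqf_prime.
have yy : progr y q y by exists 0; rewrite muln0 addn0.
have [w [[n Hw] Hz]] := H _ (kopen_progr bq) yy.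
have e := progr_mod Hz.
have e2 : w = z %[mod q] by rewrite -(modn_dvdm w qc) e modn_dvdm.
by rewrite -e2 Hw mulnC addnC modnMDl.
Qed.

Lemma modeq_dvd d m a b : d %| m -> a = b %[mod m] -> a = b %[mod d].
Proof. by move=> dm e; rewrite -(modn_dvdm a dm) e modn_dvdm. Qed.

Lemma modAM a m k : a + m * k = a %[mod m].
Proof. by rewrite addnC mulnC modnMDl. Qed.

Lemma chin2 m1 m2 a b : coprime m1 m2 -> a = b %[mod m1] -> a = b %[mod m2] ->
  a = b %[mod m1 * m2].
Proof.
move=> c e1 e2; apply/eqP; rewrite chinese_remainder //.
by apply/andP; split; apply/eqP.
Qed.

Lemma meet b d x y : 0 < b -> 0 < d -> sqf b ->
  (forall p, prime p -> p %| b -> p %| d -> x = y %[mod p]) ->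
  exists w, [/\ x <= w, y <= w, w = x %[mod b] & w = y %[mod d]].
Proof.
elim/ltn_ind: b => b IH b0 d0 sb H.
case: (leqP b 1) => b1.
  have -> : b = 1 by lia.
  exists (y + d * x); split.
  - have := leq_pmull x d0; lia.
  - by rewrite leq_addr.
  - by rewrite !modn1.
  - by rewrite modAM.
set p := pdiv b.
have pp : prime p by apply: pdiv_prime.
have pb : p %| b by apply: pdiv_dvd.
set b' := b %/ p.
have eb : b = b' * p by rewrite divnK.
have b'0 : 0 < b' by move: b0; rewrite eb muln_gt0 => /andP[].
have b'lt : b' < b by apply: ltn_Pdiv => //; apply: prime_gt1.
have pb' : ~~ (p %| b').
  apply/negP => /dvdn_mul => /(_ p p (dvdnn p)); rewrite -eb.
  by apply/negP; apply: sb.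
have sb' : sqf b'.
  move=> q qp; apply/negP => Hq; move: (sb q qp); rewrite eb.
  by rewrite (dvdn_mulr _ Hq).
have cb'p : coprime b' p by rewrite coprime_sym prime_coprime.
have [w' [xw yw wx wy]] : exists w, [/\ x <= w, y <= w, w = x %[mod b'] & w = y %[mod d]].
  apply: IH => // q qp qb qd; apply: H => //; rewrite eb; exact: dvdn_mulr.
case: (boolP (p %| d)) => pd.
  exists w'; split => //; rewrite eb; apply: chin2 => //.
  by rewrite (modeq_dvd pd wy) (H p pp pb pd).
have cp : coprime p (b' * d) by rewrite prime_coprime // Euclid_dvdM // negb_or pb' pd.
set w0 := chinese p (b' * d) x w'.
exists (w0 + p * (b' * d) * (x + y)); split.
- have h : x + y <= p * (b' * d) * (x + y).
    rewrite leq_pmull // !muln_gt0 b'0 d0 prime_gt0 //.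
  apply: leq_trans (leq_trans _ h) (leq_addl _ _).
  by rewrite ?leq_addr ?leq_addl.
- have h : x + y <= p * (b' * d) * (x + y).
    rewrite leq_pmull // !muln_gt0 b'0 d0 prime_gt0 //.
  apply: leq_trans (leq_trans _ h) (leq_addl _ _).
  by rewrite ?leq_addr ?leq_addl.
- have e1 : w0 + p * (b' * d) * (x + y) = w' %[mod b' * d].
    rewrite [p * _]mulnC -mulnA modAM.
    exact: chinese_modr.
  rewrite eb; apply: chin2 => //.
    by rewrite (modeq_dvd (dvdn_mulr d (dvdnn b')) e1).
  by rewrite -mulnA modAM chinese_modl.
- have e1 : w0 + p * (b' * d) * (x + y) = w' %[mod b' * d].
    rewrite [p * _]mulnC -mulnA modAM.
    exact: chinese_modr.
  by rewrite (modeq_dvd (dvdn_mull b' (dvdnn d)) e1).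
Qed.

Lemma clos_suff a b x y : basic a b -> progr a b x -> 0 < y ->
  (forall q, prime q -> q %| b -> ~~ (q %| y) -> x = y %[mod q]) ->
  kclosure (progr a b) y.
Proof.
move=> [a0 b0 cab sb] [n0 Hx] y0 H; split => // V oV Vy.
have [c [d [[c0 d0 ccd sd] [[m0 Hy] sub]]]] := oV y Vy.
have [w [xw yw wx wy]] : exists w, [/\ x <= w, y <= w, w = x %[mod b] & w = y %[mod d]].
  apply: meet => // p pp pb pd; apply: H => //.
  apply/negP => py.
  have pc : p %| c.
    by rewrite -(dvdn_addr c (dvdn_mulr m0 pd)) addnC -Hy.
  have : p %| gcdn c d by rewrite dvdn_gcd pc pd.
  rewrite (eqP ccd) dvdn1 => /eqP p1; subst p; by [].
exists w; split.
- apply: sub.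
  move/eqP: wy; rewrite eqn_mod_dvd // => /dvdnP [k hk].
  exists (m0 + k); rewrite mulnDr addnA -Hy [d * k]mulnC -hk; lia.
- move/eqP: wx; rewrite eqn_mod_dvd // => /dvdnP [k hk].
  exists (n0 + k); rewrite mulnDr addnA -Hx [b * k]mulnC -hk; lia.
Qed.

Definition Cp (S : seq nat) (p r : nat) : Prop :=
  forall z, z \in S -> ~~ (p %| z) -> p %| r \/ r = z %[mod p].

Lemma collect (s : seq nat) (P : nat -> nat -> Prop) :
  (forall x, x \in s -> exists b, 0 < b /\ P x b) ->
  exists N, 0 < N /\ forall x, x \in s -> exists b, P x b /\ b %| N.
Proof.
elim: s => [|x s IH] H; first by exists 1.
have [N [N0 HN]] : exists N, 0 < N /\ forall x, x \in s -> exists b, P x b /\ b %| N.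
  by apply: IH => z zs; apply: H; rewrite inE zs orbT.
have [b [b0 Pb]] := H x (mem_head _ _).
exists (b * N); split; first by rewrite muln_gt0 b0 N0.
move=> z; rewrite inE => /orP [/eqP -> | zs].
  by exists b; split => //; apply: dvdn_mulr.
have [c [Pc cN]] := HN z zs; exists c; split => //; exact: dvdn_mull.
Qed.

Lemma kclosure_mono (U U' : nat -> Prop) y :
  (forall w, U w -> U' w) -> kclosure U y -> kclosure U' y.
Proof.
move=> sub [y0 H]; split => // V oV Vy.
have [w [Vw Uw]] := H V oV Vy; exists w; split => //; exact: sub.
Qed.

Lemma dvd_mod_eq p a b : a = b %[mod p] -> (p %| a) = (p %| b).
Proof. by rewrite /dvdn => ->. Qed.

Lemma progr_coprime_dvd a b z q : basic a b -> progr a b z -> prime q -> q %| b ->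
  ~~ (q %| z).
Proof.
move=> [_ _ cab _] [n ->] qp qb; apply/negP => qz.
have : q %| gcdn (a + b * n) b by rewrite dvdn_gcd qz qb.
rewrite (eqP (coprime_progr n cab)) dvdn1 => /eqP q1; subst q; by [].
Qed.

Lemma fwd E F p r x0 : all (fun x => 0 < x) E -> x0 \in E ->
  (forall B : nat -> Prop, (forall n, B n -> 0 < n) -> inF E B -> inF F B) ->
  prime p -> Cp F p r -> Cp E p r.
Proof.
move=> /allP Epos x0E H pp CF.
pose B := fun y => 0 < y /\ Cp E p y.
have : inF F B.
  apply: H; first by move=> n [].
  exists (fun x => progr x (if p %| x then 1 else p)); split.
    move=> x xE; split; last by exists 0; rewrite muln0 addn0.
    apply: kopen_progr; case: ifP => px.
      split; [exact: Epos | by [] | by rewrite coprimen1 | exact: sqf1].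
    split; [exact: Epos | exact: prime_gt0 | | exact: sqf_prime].
    by rewrite coprime_sym prime_coprime // px.
  move=> y Hy; split; first by case: (Hy x0 x0E).
  move=> z zE pz; case: (boolP (p %| y)) => py; first by left.
  right; have := Hy z zE; rewrite (negbTE pz) => Hc.
  exact: (clos_nec Hc pp (dvdnn p) py).
move=> [U' [HU' HB]].
have [N [N0 HN]] : exists N, 0 < N /\ forall z, z \in F -> exists b, (exists a, [/\ basic a b, progr a b z &
   forall w, progr a b w -> U' z w]) /\ b %| N.
  apply: collect => z zF.
  have [Hop Hz] := HU' z zF.
  have [a [b [bab [zab sub]]]] := Hop z Hz.
  exists b; split; first by case: bab.
  by exists a; split.
have [m cpm eN] := pfactor_coprime pp N0.
have m0 : 0 < m by move: N0; rewrite eN muln_gt0 => /andP[].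
have cmp : coprime m p by rewrite coprime_sym.
set y := chinese m p 0 r + m * p.
have ym : y = 0 %[mod m] by rewrite /y modAM chinese_modl.
have yp : y = r %[mod p] by rewrite /y mulnC modAM chinese_modr.
have y0 : 0 < y by rewrite /y addn_gt0 muln_gt0 m0 (prime_gt0 pp) orbT.
have [_ CE] : B y.
  apply: HB => z zF.
  have [b [[a [bab zab sub]] bN]] := HN z zF.
  apply: (kclosure_mono sub); apply: (clos_suff bab zab y0) => q qp qb qy.
  case: (eqVneq q p) => [eqp | nqp].
    subst q.
    have pz := progr_coprime_dvd bab zab pp qb.
    case: (CF z zF pz) => [pr | ezr].
      by move: qy; rewrite (dvd_mod_eq yp) pr.
    by rewrite yp ezr.
  exfalso; move: qy; apply/negP/negPn.
  have qN : q %| m * p ^ logn p N by rewrite -eN; exact: dvdn_trans qb bN.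
  have cq : coprime q (p ^ logn p N).
    apply: coprimeXr; rewrite prime_coprime // dvdn_prime2 //; exact: nqp.
  have qm : q %| m by rewrite -(Gauss_dvdl _ cq).
  by rewrite (dvd_mod_eq (modeq_dvd qm ym)) dvdn0.
move=> z zE pz; case: (CE z zE pz) => [py | eyz].
  by left; rewrite -(dvd_mod_eq yp).
by right; rewrite -yp.
Qed.

Lemma sqf_prod n (P : pred 'I_n) : (forall i : 'I_n, P i -> prime i) ->
  sqf (\prod_(i < n | P i) i).
Proof.
move=> Hp q qp; apply/negP => H.
have : q %| \prod_(i < n | P i) i by apply: dvdn_trans H; apply: dvdn_mulr.
rewrite Euclid_dvd_prod // big_orE => /existsP [i /andP [Pi qi]].
move: qi; rewrite dvdn_prime2 // ?Hp // => /eqP qi; subst q.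
move: H; rewrite (bigD1 i) //= dvdn_pmul2l ?prime_gt0 ?Hp //.
rewrite Euclid_dvd_prod ?Hp // big_orE => /existsP [j /andP [/andP [Pj nji] qj]].
move: qj; rewrite dvdn_prime2 ?Hp // => /eqP ij.
have e : i = j by apply: val_inj.
by rewrite e eqxx in nji.
Qed.

Definition cz (N z : nat) := \prod_(q < N.+1 | prime q && (q %| N) && ~~ (q %| z)) q.

Lemma cz_basic N z : 0 < z -> basic z (cz N z).
Proof.
move=> z0; split => //.
- apply: (big_ind (fun c => 0 < c)) => //; first by move=> a b a0 b0; rewrite muln_gt0 a0 b0.
  by move=> i /andP [/andP [pi _] _]; exact: prime_gt0.
- apply: (big_ind (fun c => coprime z c)); [exact: coprimen1 | by move=> a b ha hb; rewrite coprimeMr ha hb |].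
  by move=> i /andP [/andP [pi _] iz]; rewrite coprime_sym prime_coprime.
- by apply: sqf_prod => i /andP [/andP [pi _] _].
Qed.

Lemma cz_dvd N z q : 0 < N -> prime q -> q %| N -> ~~ (q %| z) -> q %| cz N z.
Proof.
move=> N0 qp qN qz.
have qlt : q < N.+1 by rewrite ltnS; apply: dvdn_leq.
rewrite /cz (bigD1 (Ordinal qlt)) /=; first exact: dvdn_mulr.
by rewrite qp qN qz.
Qed.

Lemma bwd E F z0 : all (fun x => 0 < x) F -> z0 \in F ->
  (forall p, prime p -> p <> 2 -> forall r, Cp F p r -> Cp E p r) ->
  forall B : nat -> Prop, inF E B -> inF F B.
Proof.
move=> /allP Fpos z0F Hodd B [U [HU HB]].
have [N [N0 HN]] : exists N, 0 < N /\ forall x, x \in E -> exists b, (exists a, [/\ basic a b, progr a b x &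
   forall w, progr a b w -> U x w]) /\ b %| N.
  apply: collect => x xE.
  have [Hop Hx] := HU x xE.
  have [a [b [bab [xab sub]]]] := Hop x Hx.
  exists b; split; first by case: bab.
  by exists a; split.
exists (fun z => progr z (cz N z)); split.
  move=> z zF; split; last by exists 0; rewrite muln0 addn0.
  by apply: kopen_progr; apply: cz_basic; apply: Fpos.
move=> y Hy; apply: HB => x xE.
have y0 : 0 < y by case: (Hy z0 z0F).
have [b [[a [bab xab sub]] bN]] := HN x xE.
apply: (kclosure_mono sub); apply: (clos_suff bab xab y0) => q qp qb qy.
have qx := progr_coprime_dvd bab xab qp qb.
case: (eqVneq q 2) => [q2 | nq2].
  subst q; move: qx qy; rewrite !dvdn2 !negbK => ox oy.
  by rewrite !modn2 ox oy.
have CF : Cp F q y.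
  move=> z zF qz; right.
  apply: (clos_nec (Hy z zF) qp _ qy).
  by apply: cz_dvd => //; apply: dvdn_trans qb bN.
have nq2' : q <> 2 by move/eqP: nq2.
case: (Hodd q qp nq2' y CF x xE qx) => [qy' | e]; first by rewrite qy' in qy.
by rewrite e.
Qed.

Lemma mod0_dvd p z : (z = 0 %[mod p]) <-> p %| z.
Proof. by rewrite mod0n /dvdn; split; [move=> -> | move/eqP]. Qed.

Lemma notPi_ex S p : prime p -> ~ inPi S p -> exists2 z, z \in S & ~~ (p %| z).
Proof.
move=> pp nP; case: (boolP (all (fun z => p %| z) S)) => [/allP h | /allPn //].
by exfalso; apply: nP; split.
Qed.

Theorem lemma3p5 (E F : seq nat) (alphaE alphaF : nat -> nat) :
  uniq E -> all (fun x => 0 < x) E -> 2 <= size E ->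
  uniq F -> all (fun x => 0 < x) F -> 2 <= size F ->
  is_alpha E alphaE -> is_alpha F alphaF ->
  ((forall B : nat -> Prop, (forall n, B n -> 0 < n) -> inF E B -> inF F B) <->
   [/\ (forall p, inA F p -> inA E p),
       (forall p, inPi F p -> p <> 2 -> inPi E p) &
       (forall p, inA F p -> ~ inPi E p -> alphaE p = alphaF p)]).
Proof.
move=> uE Epos sE uF Fpos sF aE aF.
have x0E : head 0 E \in E by move: sE; case: (E) => [|a s] //= _; rewrite mem_head.
have z0F : head 0 F \in F by move: sF; case: (F) => [|a s] //= _; rewrite mem_head.
split.
  move=> H.
  have C : forall p r, prime p -> Cp F p r -> Cp E p r.
    by move=> p r pp; apply: (fwd Epos x0E H).
  have h1 : forall p, inA F p -> inA E p.
    move=> p [pp [k [k0 Hk]]]; split => //.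
    case: (boolP (p %| k)) => pk.
      have CF : Cp F p 1.
        move=> z zF pz; exfalso; move: pz; apply/negP/negPn.
        case: (Hk z zF) => [/mod0_dvd // | e].
        by apply/mod0_dvd; rewrite e; apply/mod0_dvd.
      exists 1; split => // x xE; case: (boolP (p %| x)) => px.
        by left; apply/mod0_dvd.
      case: (C p 1 pp CF x xE px) => [p1 | e]; last by right.
      exfalso; have := dvdn_leq (ltn0Sn 0) p1; have := prime_gt1 pp; lia.
    have CF : Cp F p k.
      move=> z zF pz; right.
      case: (Hk z zF) => [/mod0_dvd e | e] //; by rewrite e in pz.
    exists k; split => // x xE; case: (boolP (p %| x)) => px.
      by left; apply/mod0_dvd.
    case: (C p k pp CF x xE px) => [p1 | e]; last by right.
    by rewrite p1 in pk.
  have h2 : forall p, inPi F p -> p <> 2 -> inPi E p.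
    move=> p [pp allF] p2; split => // x xE.
    case: (boolP (p %| x)) => // px; exfalso.
    have CF : forall r, Cp F p r by move=> r z zF pz; rewrite allF in pz.
    have p1 : ~~ (p %| 1) by rewrite dvdn1; apply/eqP => e; rewrite e in pp.
    have p2' : ~~ (p %| 2).
      by rewrite dvdn_prime2 //; apply/eqP.
    case: (C p 1 pp (CF 1) x xE px) => [h | e1]; first by rewrite h in p1.
    case: (C p 2 pp (CF 2) x xE px) => [h | e2]; first by rewrite h in p2'.
    have pg2 : 2 < p by have := prime_gt1 pp; lia.
    move: e1; rewrite -e2 !modn_small //; lia.
  split => // p pAF nPE.
  have pAE := h1 p pAF.
  have pp : prime p by case: pAF.
  have [x0 x0E' px0] := notPi_ex pp nPE.
  have [ltE memE twoE piE] := aE p pAE.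
  have [ltF memF twoF piF] := aF p pAF.
  have ex0 : x0 = alphaE p %[mod p].
    by case: (memE x0 x0E') => [/mod0_dvd h | //]; rewrite h in px0.
  case: (boolP (all (fun z => p %| z) F)) => [/allP allF | /allPn [z0 z0F' pz0]].
    case: (eqVneq p 2) => [p2 | np2]; first by rewrite twoE // twoF.
    exfalso; apply: nPE; apply: h2; [by split | by apply/eqP].
  have ez0 : z0 = alphaF p %[mod p].
    by case: (memF z0 z0F') => [/mod0_dvd h | //]; rewrite h in pz0.
  have CF : Cp F p (alphaF p).
    move=> z zF pz; right.
    by case: (memF z zF) => [/mod0_dvd h | e //]; rewrite h in pz.
  case: (C p _ pp CF x0 x0E' px0) => [h | e].
    by exfalso; move: pz0; rewrite (dvd_mod_eq ez0) h.
  by move: e; rewrite ex0 !modn_small // => ->.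
move=> [h1 h2 h3] B _; apply: (bwd Fpos z0F).
move=> p pp p2 r CF x xE px.
case: (boolP (p %| r)) => pr; first by left.
right.
have [z0 z0F' pz0] : exists2 z, z \in F & ~~ (p %| z).
  apply: notPi_ex => // PF.
  by have [_ h] := h2 p PF p2; rewrite h in px.
have er : r = z0 %[mod p] by case: (CF z0 z0F' pz0) => // h; rewrite h in pr.
have pAF : inA F p.
  split => //; exists r; split; first by case: r pr {er CF} => //; rewrite dvdn0.
  move=> z zF; case: (boolP (p %| z)) => pz; first by left; apply/mod0_dvd.
  by right; case: (CF z zF pz) => // h; rewrite h in pr.
have pAE := h1 p pAF.
have nPE : ~ inPi E p by case=> _ h; rewrite h in px.
have [_ memE _ _] := aE p pAE.
have [_ memF _ _] := aF p pAF.
have ex : x = alphaE p %[mod p].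
  by case: (memE x xE) => [/mod0_dvd h | //]; rewrite h in px.
have ez0 : z0 = alphaF p %[mod p].
  by case: (memF z0 z0F') => [/mod0_dvd h | //]; rewrite h in pz0.
by rewrite er ez0 ex (h3 p pAF nPE).
Qed.
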